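(* Let $X$ be a non-negative absolutely continuous random variable with CDF $F$ and PDF $f$, and let $T_1,T_2$ be the lifetimes of two coherent systems whose components are identically distributed as $X$, with distortion functions $q_1,q_2$, so that $T_i$ has CDF $F_{T_i}(x)=q_i(F(x))$ and PDF $f_{T_i}(x)=q_i'(F(x))f(x)$, $i=1,2$. Let $0<\alpha<\infty$, $\alpha\ne1$, $\beta>0$, put $\psi_{\alpha,i}(u)=f_{T_i}^\alpha(F_{T_i}^{-1}(u))$ for $0\le u\le1$, and $$\gamma_{1,\alpha}=\Big(\inf_{u\in(0,1)}\frac{\psi_{\alpha,2}(q_2(u))}{\psi_{\alpha,1}(q_1(u))}\Big)^{\beta-1},\qquad \gamma_{2,\alpha}=\Big(\sup_{u\in(0,1)}\frac{\psi_{\alpha,2}(q_2(u))}{\psi_{\alpha,1}(q_1(u))}\Big)^{\beta-1}.$$ Then (A) $\gamma_{1,\alpha}R^\alpha_\beta(T_1)\le R^\alpha_\beta(T_2)\le \gamma_{2,\alpha}R^\alpha_\beta(T_1)$ for $\{\alpha>1,\beta\le1\}$ or $\{0<\alpha<1,\beta\ge1\}$; (B) $\gamma_{1,\alpha}R^\alpha_\beta(T_1)\ge R^\alpha_\beta(T_2)\ge \gamma_{2,\alpha}R^\alpha_\beta(T_1)$ for $\{\alpha>1,\beta\ge1\}$ or $\{0<\alpha<1,\beta\le1\}$.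
   Context: For a non-negative absolutely continuous random variable $Z$ with PDF $h$, the Rényi information generating function is $R^\alpha_\beta(Z)=\frac{1}{1-\alpha}\left(\int_0^\infty h^\alpha(x)\,dx\right)^{\beta-1}$; all integrals are assumed finite and the infimum and supremum are assumed finite and positive. A distortion function is a continuous increasing (differentiable) function $q:[0,1]\to[0,1]$ with $q(0)=0$, $q(1)=1$. Quantile functions are $F^{-1}(u)=\inf\{x:F(x)\ge u\}$. *)

(* Defs.v *)
From HB Require Import structures.
From mathcomp Require Import all_boot all_order all_algebra.
From mathcomp Require Import all_classical all_reals all_analysis.
Set Implicit Arguments. Unset Strict Implicit. Unset Printing Implicit Defensive.
Import Order.TTheory GRing.Theory Num.Theory.
Import numFieldNormedType.Exports.
Local Open Scope classical_set_scope.
Local Open Scope ring_scope.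

Section Defs.
Variable R : realType.

Definition is_nonneg_pdf (f : R -> R) : Prop :=
  measurable_fun setT f /\ (forall x, 0 <= f x) /\ (forall x, x < 0 -> f x = 0) /\
  (@lebesgue_measure R).-integrable setT (EFin \o f) /\
  Rintegral (@lebesgue_measure R) setT f = 1.

Definition cdf_of (f : R -> R) (x : R) : R :=
  Rintegral (@lebesgue_measure R) `]-oo, x]%classic f.

Definition quantile (G : R -> R) (u : R) : R := inf [set x | u <= G x].

Definition distortion (q : R -> R) : Prop :=
  q 0 = 0 /\ q 1 = 1 /\
  {within `[0, 1], continuous q} /\
  {in `[0, 1]&, forall x y, x < y -> q x < q y} /\
  (forall u, 0 <= u <= 1 -> 0 <= q u <= 1) /\
  (forall u, 0 < u < 1 -> derivable q u 1).

Definition sys_cdf (q f : R -> R) (x : R) : R := q (cdf_of f x).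
Definition sys_pdf (q f : R -> R) (x : R) : R := derive1 q (cdf_of f x) * f x.

Definition renyi_igf (alpha beta : R) (h : R -> R) : R :=
  (1 - alpha)^-1 *
  (Rintegral (@lebesgue_measure R) `[0, +oo[%classic (fun x => h x `^ alpha))
    `^ (beta - 1).

Definition psi (alpha : R) (G h : R -> R) (u : R) : R :=
  (h (quantile G u)) `^ alpha.

End Defs.

(* Main.v *)
Require Import Defs.
From HB Require Import structures.
From mathcomp Require Import all_boot all_order all_algebra.
From mathcomp Require Import all_classical all_reals all_analysis.
From mathcomp Require Import ring lra.
Import Order.TTheory GRing.Theory Num.Theory.
Import numFieldNormedType.Exports.
Local Open Scope classical_set_scope.
Local Open Scope ring_scope.



Notation mu := (@lebesgue_measure _).

Lemma F_ge0 (R : realType) (f : R -> R) : is_nonneg_pdf f -> forall x, 0 <= cdf_of f x.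
Proof. move=> [_ [f0 _]] x; apply: Rintegral_ge0 => y _; exact: f0. Qed.

Lemma pdf_int (R : realType) (f : R -> R) (D : set R) : is_nonneg_pdf f -> @measurable _ (measurableTypeR R) D ->
  (@lebesgue_measure R).-integrable D (EFin \o f).
Proof. move=> [_ [_ [_ [intf _]]]] mD; exact: integrableS intf. Qed.

Lemma F_diff (R : realType) (f : R -> R) a b : is_nonneg_pdf f -> a <= b ->
  cdf_of f b - cdf_of f a = Rintegral (@lebesgue_measure R) `]a, b] f.
Proof.
move=> hf ab; rewrite /cdf_of.
have := (@Rintegral_itvB R f (BInfty _ true) (BRight b) a).
apply => //; exact: pdf_int.
Qed.

Lemma F_compl (R : realType) (f : R -> R) a : is_nonneg_pdf f ->
  1 - cdf_of f a = Rintegral (@lebesgue_measure R) `]a, +oo[ f.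
Proof.
move=> hf; rewrite /cdf_of.
have := (@Rintegral_itvB R f (BInfty _ true) (BInfty _ false) a).
rewrite set_itvNyy. case: (hf) => _ [_ [_ [_ ->]]].
by apply => //; exact: pdf_int.
Qed.

Lemma F_le1 (R : realType) (f : R -> R) x : is_nonneg_pdf f -> cdf_of f x <= 1.
Proof.
move=> hf; rewrite -subr_ge0 F_compl//; apply: Rintegral_ge0 => y _.
by case: hf => _ [+ _]; apply.
Qed.

Lemma F_mono (R : realType) (f : R -> R) a b : is_nonneg_pdf f -> a <= b ->
  cdf_of f a <= cdf_of f b.
Proof.
move=> hf ab; rewrite -subr_ge0 F_diff//; apply: Rintegral_ge0 => y _.
by case: hf => _ [+ _]; apply.
Qed.

Lemma F_neg (R : realType) (f : R -> R) x : is_nonneg_pdf f -> x < 0 -> cdf_of f x = 0.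
Proof.
move=> [_ [_ [fn _]]] x0; rewrite /cdf_of.
rewrite (@eq_Rintegral _ _ _ _ _ (fun=> 0)).
  by rewrite Rintegral_cst// mul0r.
move=> y; rewrite inE /= in_itv /= => yx; apply: fn; exact: le_lt_trans yx x0.
Qed.



Lemma F_cont (R : realType) (f : R -> R) : is_nonneg_pdf f -> forall e : R, 0 < e ->
  exists2 d : R, 0 < d & forall a b, a <= b -> b - a < d -> cdf_of f b - cdf_of f a < e.
Proof.
move=> hf e e0.
have intf : (@lebesgue_measure R).-integrable setT (EFin \o f) by case: hf => _ [_ [_ []]].
have [d [d0 H]] := integral_normr_continuous intf e0.
exists d => // a b ab bad.
rewrite F_diff//.
have -> : Rintegral (@lebesgue_measure R) `]a, b] f = Rintegral (@lebesgue_measure R) `]a, b] (fun x => `|f x|).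
  apply: eq_Rintegral => x _; rewrite ger0_norm//; by case: hf => _ [+ _]; apply.
apply: H => //.
have L := lebesgue_measure_itv `]a, b].
apply: le_lt_trans; first (rewrite le_eqVlt; apply/orP; left; apply/eqP; exact: L).
rewrite /= lte_fin; case: ifPn => H; last by rewrite lte_fin.
by rewrite -EFinD lte_fin.

Qed.



Lemma null_of_int0 (R : realType) (f : R -> R) (D : set R) : is_nonneg_pdf f ->
  @measurable _ (measurableTypeR R) D -> Rintegral (@lebesgue_measure R) D f = 0 ->
  (@lebesgue_measure R).-negligible (D `&` [set x | f x != 0]).
Proof.
move=> hf mD I0.
have intD := pdf_int _ _ _ hf mD.
have f0 : forall x, 0 <= f x by case: hf => _ [].
have mfD := measurable_int _ intD.
have key := ae_eq_integral_abs (@lebesgue_measure R) mD mfD.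
have [N [mN N0 sN]] : ae_eq (R:=R) (@lebesgue_measure R) (V:=fun=> \bar R) D (EFin \o f) (cst 0).
  apply/key.
  under eq_integral => x _ do rewrite /= ger0_norm//.
  have := integrable_fin_num mD intD; rewrite /= => /fineK <-.
  by move: I0; rewrite /Rintegral => ->.
exists N; split => //; apply: subset_trans sN => x [Dx fx] /=.
by move=> /(_ Dx) /= /eqP; rewrite eqe; apply/negP.
Qed.

Lemma N0_null (R : realType) (f : R -> R) : is_nonneg_pdf f ->
  (@lebesgue_measure R).-negligible [set x | cdf_of f x = 0 /\ f x != 0].
Proof.
move=> hf.
have G a : cdf_of f a = 0 ->
    (@lebesgue_measure R).-negligible (`]-oo, a] `&` [set x | f x != 0]).
  by move=> Fa; apply: null_of_int0 => //; exact: measurable_itv.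
pose A := [set x | cdf_of f x = 0].
have [[M HM]|nb] := pselect (exists M, forall x, A x -> x <= M).
  have hsA : has_sup A.
    split; first by exists (-1); apply: F_neg => //; rewrite oppr_lt0.
    by exists M => x /HM.
  have Fs : cdf_of f (sup A) = 0.
    apply/eqP; rewrite eq_le F_ge0// andbT; rewrite leNgt; apply/negP => Fs0.
    have [d d0 Hd] := F_cont _ _ hf _ Fs0.
    have [y Ay yd] := sup_adherent d0 hsA.
    have ys : y <= sup A by apply: sup_upper_bound.
    have := Hd _ _ ys; rewrite ltrBlDr -ltrBlDl => /(_ yd).
    by rewrite Ay subr0 ltxx.
  apply: negligibleS (G _ Fs) => x [Ax fx]; split => //=.
  by rewrite in_itv /=; apply: sup_upper_bound.
have H n : cdf_of f n%:R = 0.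
  have [x [Ax nx]] : exists x, A x /\ n%:R <= x.
    apply: contra_notP nb => H; exists n%:R => x Ax.
    by rewrite leNgt; apply/negP => nx; apply: H; exists x; split => //; exact: ltW.
  apply/eqP; rewrite eq_le F_ge0// andbT -Ax; exact: F_mono.
have NB : (@lebesgue_measure R).-negligible
    (\bigcup_n (`]-oo, (n%:R : R)] `&` [set x | f x != 0])).
  by apply: negligible_bigcup => n; exact: G.
apply: negligibleS NB => x [Ax fx]; exists (Num.truncn x).+1 => //; split => //=.
by rewrite in_itv /= ltW// Num.Theory.truncnS_gt.
Qed.

Lemma N1_null (R : realType) (f : R -> R) : is_nonneg_pdf f ->
  (@lebesgue_measure R).-negligible [set x | cdf_of f x = 1 /\ f x != 0].
Proof.
move=> hf.
pose A := [set x | cdf_of f x = 1].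
have [[x0 Ax0]|nA] := pselect (exists x, A x); last first.
  by apply: (negligibleS _ (negligible_set0 _)) => x [Ax _]; apply: nA; exists x.
have lbA : lbound A 0.
  move=> x Ax; rewrite leNgt; apply/negP => x0'.
  by move: Ax; rewrite /A /= F_neg// => /esym/eqP; rewrite oner_eq0.
have hiA : has_inf A by split; [exists x0 | exists 0].
have Ft : cdf_of f (inf A) = 1.
  apply/eqP; rewrite eq_le F_le1// /=; rewrite leNgt; apply/negP => Ft1.
  have e0 : 0 < 1 - cdf_of f (inf A) by rewrite subr_gt0.
  have [d d0 Hd] := F_cont _ _ hf _ e0.
  have [y Ay yd] := inf_adherent d0 hiA.
  have ty : inf A <= y by apply: ge_inf => //; exists 0.
  have := Hd _ _ ty; rewrite ltrBlDl addrC => /(_ ltac:(by rewrite addrC)).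
  by rewrite Ay ltxx.
have G : (@lebesgue_measure R).-negligible (`]inf A, +oo[ `&` [set x | f x != 0]).
  apply: (null_of_int0 _ _ _ hf); first exact: measurable_itv.
  by rewrite -F_compl// Ft subrr.
have N1 : (@lebesgue_measure R).-negligible [set inf A].
  exists [set inf A]; split => //; exact: lebesgue_measure_set1.
apply: (negligibleS _ (negligibleU N1 G)) => x [Ax fx].
have : inf A <= x by apply: ge_inf => //; exists 0.
rewrite le_eqVlt => /predU1P[->|tx]; first by left.
by right; split => //=; rewrite in_itv /= tx.
Qed.



Lemma quantile_sys (R : realType) (q f : R -> R) u : is_nonneg_pdf f -> distortion q ->
  0 < u < 1 -> quantile (sys_cdf q f) (q u) = quantile (cdf_of f) u.
Proof.
move=> hf [_ [_ [_ [qi _]]]] /andP[u0 u1]; rewrite /quantile /sys_cdf; congr inf.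
apply/funext => x /=; apply/propext.
have uI : u \in `[0, 1] by rewrite in_itv /= !ltW.
have FI : cdf_of f x \in `[0, 1] by rewrite in_itv /= F_ge0// F_le1.
split => H.
  rewrite leNgt; apply/negP => /(qi _ _ FI uI); rewrite ltNge H //.
rewrite le_eqVlt in H; case/predU1P: H => [->//|H]; exact/ltW/qi.
Qed.

Lemma F_quant (R : realType) (f : R -> R) x : is_nonneg_pdf f -> 0 < cdf_of f x ->
  cdf_of f (quantile (cdf_of f) (cdf_of f x)) = cdf_of f x.
Proof.
move=> hf Fx0; rewrite /quantile.
set E := [set y | cdf_of f x <= cdf_of f y].
have lbE : lbound E 0.
  move=> y Ey; rewrite leNgt; apply/negP => y0.
  by move: Ey; rewrite /E /= (F_neg _ _ y)// leNgt Fx0.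
have hiE : has_inf E by split; [by exists x; rewrite /E /= | by exists 0].
have hlE : has_lbound E by exists 0.
have Qx : inf E <= x by apply: (ge_inf hlE); rewrite /E /=.
apply/eqP; rewrite eq_le F_mono//= leNgt; apply/negP => FQ.
have e0 : 0 < cdf_of f x - cdf_of f (inf E) by rewrite subr_gt0.
have [d d0 Hd] := F_cont _ _ hf _ e0.
have [y Ey yd] := inf_adherent d0 hiE.
have ty : inf E <= y by apply: (ge_inf hlE).
have := Hd _ _ ty; rewrite ltrBlDl addrC => /(_ ltac:(by rewrite addrC)).
rewrite ltrD2r => Fyx; move: Ey; rewrite /E /=; rewrite leNgt Fyx //.
Qed.

Lemma dq_ge0 (R : realType) (q : R -> R) u : distortion q -> 0 < u < 1 -> 0 <= derive1 q u.
Proof.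
move=> [_ [_ [_ [qi [_ qd]]]]] u01.
apply: (@incr_derive1_ge0_itv R q true false 0 1) => //.
  by move=> y; rewrite inE /= in_itv /=; exact: qd.
Qed.

Lemma key_ratio (R : realType) (f q1 q2 : R -> R) (alpha : R) x :
  is_nonneg_pdf f -> distortion q1 -> distortion q2 -> 0 < cdf_of f x < 1 ->
  let r := psi alpha (sys_cdf q2 f) (sys_pdf q2 f) (q2 (cdf_of f x)) /
           psi alpha (sys_cdf q1 f) (sys_pdf q1 f) (q1 (cdf_of f x)) in
  0 < r -> r * (sys_pdf q1 f x `^ alpha) = sys_pdf q2 f x `^ alpha.
Proof.
move=> hf d1 d2 Fx r r0.
have f0 : forall y, 0 <= f y by case: hf => _ [].
move: r0; rewrite /r /psi !quantile_sys// /sys_pdf F_quant//; last by case/andP: Fx.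
have g1 := dq_ge0 _ _ _ d1 Fx; have g2 := dq_ge0 _ _ _ d2 Fx.
rewrite !powRM//.
set u := cdf_of f x.
set Q := quantile _ u.
move: ((q2^`())%classic u `^ alpha) ((q1^`())%classic u `^ alpha) (f Q `^ alpha) (f x `^ alpha) => B A C E h.
have HAC : A * C != 0.
  by apply/negP => /eqP HAC; move: h; rewrite HAC invr0 mulr0 ltxx.
move: HAC; rewrite mulf_eq0 negb_or => /andP[A0 C0].
by field; rewrite A0 C0.
Qed.



Lemma powR_anti (R : realType) (p x y : R) : p <= 0 -> 0 < x -> x <= y -> y `^ p <= x `^ p.
Proof.
move=> p0 x0 xy.
have y0 : 0 < y by exact: lt_le_trans xy.
have -> : p = - (- p) by rewrite opprK.
rewrite (powRN x) (powRN y) lef_pV2 ?posrE ?powR_gt0//.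
by apply: ge0_ler_powR; rewrite ?nnegrE ?oppr_ge0// ltW.
Qed.

Lemma final_alg (R : realType) (i s I1 I2 alpha beta : R) :
  0 < i -> i <= s -> 0 <= I1 -> i * I1 <= I2 -> I2 <= s * I1 -> alpha != 1 ->
  let c := (1 - alpha)^-1 in
  (((1 < alpha /\ beta <= 1) \/ (alpha < 1 /\ 1 <= beta)) ->
     i `^ (beta - 1) * (c * I1 `^ (beta - 1)) <= c * I2 `^ (beta - 1) /\
     c * I2 `^ (beta - 1) <= s `^ (beta - 1) * (c * I1 `^ (beta - 1))) /\
  (((1 < alpha /\ 1 <= beta) \/ (alpha < 1 /\ beta <= 1)) ->
     i `^ (beta - 1) * (c * I1 `^ (beta - 1)) >= c * I2 `^ (beta - 1) /\
     c * I2 `^ (beta - 1) >= s `^ (beta - 1) * (c * I1 `^ (beta - 1))).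
Proof.
move=> i0 hs I10 iI2 I2s a1 c.
have s0 : 0 < s by exact: lt_le_trans hs.
set p := beta - 1.
have I20 : 0 <= I2 by apply: le_trans iI2; rewrite mulr_ge0// ltW.
have [I1z|I1p] := eqVneq I1 0.
  have I2z : I2 = 0 by apply/eqP; rewrite eq_le I20 andbT; move: I2s; rewrite I1z mulr0.
  rewrite I1z I2z.
  have [p0|p0] := eqVneq p 0.
    by rewrite p0 !powRr0 !mul1r; split => _; split.
  by rewrite powR0// !mulr0; split => _; split.
have I1p' : 0 < I1 by rewrite lt_neqAle eq_sym I1p.
have I2p : 0 < I2 by apply: lt_le_trans iI2; rewrite mulr_gt0.
set L := i `^ p * I1 `^ p.
set U := s `^ p * I1 `^ p.
set P := I2 `^ p.
have cpos : alpha < 1 -> 0 < c by move=> h; rewrite /c invr_gt0 subr_gt0.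
have cneg : 1 < alpha -> c < 0 by move=> h; rewrite /c invr_lt0 subr_lt0.
have Hge : 0 <= p -> L <= P /\ P <= U.
  move=> p0; rewrite /L /U /P -!powRM ?(ltW i0) ?(ltW s0)//; split; apply: ge0_ler_powR => //;
    rewrite ?nnegrE; nra.
have Hle : p <= 0 -> U <= P /\ P <= L.
  move=> p0; rewrite /L /U /P -!powRM ?(ltW i0) ?(ltW s0)//; split; apply: powR_anti => //;
    nra.
rewrite !mulrA ![_ * c]mulrC -!mulrA -/L -/U -/P.
split.
  case=> [[a b]|[a b]].
    have [h1 h2] := Hle ltac:(rewrite /p subr_le0 //).
    have := cneg a; split; nra.
  have [h1 h2] := Hge ltac:(rewrite /p subr_ge0 //).
  have := cpos a; split; nra.
case=> [[a b]|[a b]].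
  have [h1 h2] := Hge ltac:(rewrite /p subr_ge0 //).
  have := cneg a; split; nra.
have [h1 h2] := Hle ltac:(rewrite /p subr_le0 //).
have := cpos a; split; nra.
Qed.



Lemma ae_le_Rintegral (R : realType) (D : set R) (h1 h2 : R -> R) :
  @measurable _ (measurableTypeR R) D ->
  (@lebesgue_measure R).-integrable D (EFin \o h1) ->
  (@lebesgue_measure R).-integrable D (EFin \o h2) ->
  (forall x, D x -> 0 <= h1 x) -> (forall x, D x -> 0 <= h2 x) ->
  {ae (@lebesgue_measure R), forall x, D x -> h1 x <= h2 x} ->
  Rintegral (@lebesgue_measure R) D h1 <= Rintegral (@lebesgue_measure R) D h2.
Proof.
move=> mD i1 i2 p1 p2 ae12.
rewrite -lee_fin /Rintegral.
rewrite (fineK (integrable_fin_num mD i1)) (fineK (integrable_fin_num mD i2)).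
apply: ae_ge0_le_integral.
all: try done.
- exact: measurable_int i1.
- exact: measurable_int i2.
Qed.

Theorem proposition6p4 (R : realType) (f q1 q2 : R -> R) (alpha beta : R) :
  is_nonneg_pdf f ->
  distortion q1 -> distortion q2 ->
  0 < alpha -> alpha != 1 -> 0 < beta ->
  (@lebesgue_measure R).-integrable `[0, +oo[%classic
     (EFin \o (fun x => sys_pdf q1 f x `^ alpha)) ->
  (@lebesgue_measure R).-integrable `[0, +oo[%classic
     (EFin \o (fun x => sys_pdf q2 f x `^ alpha)) ->
  let ratio := fun u => psi alpha (sys_cdf q2 f) (sys_pdf q2 f) (q2 u) /
                        psi alpha (sys_cdf q1 f) (sys_pdf q1 f) (q1 u) in
  let S := [set ratio u | u in `]0, 1[%classic] in
  has_ubound S -> has_lbound S -> 0 < inf S ->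
  let gamma1 := inf S `^ (beta - 1) in
  let gamma2 := sup S `^ (beta - 1) in
  let R1 := renyi_igf alpha beta (sys_pdf q1 f) in
  let R2 := renyi_igf alpha beta (sys_pdf q2 f) in
  (((1 < alpha /\ beta <= 1) \/ (alpha < 1 /\ 1 <= beta)) ->
     gamma1 * R1 <= R2 /\ R2 <= gamma2 * R1) /\
  (((1 < alpha /\ 1 <= beta) \/ (alpha < 1 /\ beta <= 1)) ->
     gamma1 * R1 >= R2 /\ R2 >= gamma2 * R1).
Proof.
move=> hf d1 d2 a0 a1 b0 int1 int2 ratio S hub hlb iS0 gamma1 gamma2 R1 R2.
set g1 := fun x => sys_pdf q1 f x `^ alpha.
set g2 := fun x => sys_pdf q2 f x `^ alpha.
have f0 : forall y, 0 <= f y by case: hf => _ [].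
have mD : @measurable _ (measurableTypeR R) `[0, +oo[%classic by exact: measurable_itv.
have Sr : forall u, 0 < u < 1 -> S (ratio u) by move=> u u01; exists u => //; rewrite in_itv.
have hsS : has_sup S by split => //; exists (ratio 2^-1); apply: Sr; lra.
have rlb : forall u, 0 < u < 1 -> inf S <= ratio u by move=> u /Sr; apply: ge_inf.
have rub : forall u, 0 < u < 1 -> ratio u <= sup S by move=> u /Sr; apply: sup_upper_bound.
have iss : inf S <= sup S by apply: (le_trans (rlb 2^-1 _)); [lra | apply: rub; lra].
have gz : forall g : R -> R, (forall x, f x = 0 -> g x = 0) -> True by [].
have pw : forall q x, f x = 0 -> sys_pdf q f x `^ alpha = 0.
  by move=> q x fx; rewrite /sys_pdf fx mulr0 powR0// gt_eqF.
have ptw : forall x, ~ (cdf_of f x = 0 /\ f x != 0) -> ~ (cdf_of f x = 1 /\ f x != 0) ->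
    inf S * g1 x <= g2 x /\ g2 x <= sup S * g1 x.
  move=> x n0 n1.
  have [fx|fx] := eqVneq (f x) 0.
    by rewrite /g1 /g2 /= (pw q1 _ fx) (pw q2 _ fx) !mulr0; split.
  have Fx : 0 < cdf_of f x < 1.
    rewrite lt_neqAle F_ge0// lt_neqAle F_le1// !andbT; apply/andP; split.
      by apply/eqP => /esym H; apply: n0.
    by apply/eqP => H; apply: n1.
  have r0 : 0 < ratio (cdf_of f x) by exact: lt_le_trans iS0 (rlb _ Fx).
  have K := key_ratio _ _ _ _ alpha x hf d1 d2 Fx r0.
  rewrite /g2 -K /g1; split; apply: ler_wpM2r; rewrite ?powR_ge0 ?rlb ?rub//.
have N := negligibleU (N0_null _ _ hf) (N1_null _ _ hf).
have ae1 : {ae (@lebesgue_measure R), forall x, `[0, +oo[%classic x -> inf S * g1 x <= g2 x}.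
  apply: negligibleS N => x /= H; apply: contrapT => H'; apply: H => _.
  by have [] := ptw x (fun h => H' (or_introl h)) (fun h => H' (or_intror h)).
have ae2 : {ae (@lebesgue_measure R), forall x, `[0, +oo[%classic x -> g2 x <= sup S * g1 x}.
  apply: negligibleS N => x /= H; apply: contrapT => H'; apply: H => _.
  by have [] := ptw x (fun h => H' (or_introl h)) (fun h => H' (or_intror h)).
have intZ : forall (k : R) (g : R -> R),
    (@lebesgue_measure R).-integrable `[0, +oo[%classic (EFin \o g) ->
    (@lebesgue_measure R).-integrable `[0, +oo[%classic (EFin \o (fun x => k * g x)).
  move=> k g ig; apply: (eq_integrable mD _ _ _ (integrableZl mD k ig)) => x _.
  by rewrite /= EFinM.
have g1p : forall x, 0 <= g1 x by move=> x; rewrite /g1 powR_ge0.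
have g2p : forall x, 0 <= g2 x by move=> x; rewrite /g2 powR_ge0.
have I1le : inf S * Rintegral (@lebesgue_measure R) `[0, +oo[%classic g1 <=
            Rintegral (@lebesgue_measure R) `[0, +oo[%classic g2.
  have H := (ae_le_Rintegral _ _ (fun x => inf S * g1 x) g2 mD (intZ _ _ int1) int2).
  have H2 : forall x : R, `[0, +oo[%classic x -> 0 <= inf S * g1 x.
    by move=> x _; rewrite mulr_ge0// ltW.
  have H3 := H H2 (fun x _ => g2p x) ae1.
  by move: H3; rewrite (RintegralZl _ mD int1).
have I2le : Rintegral (@lebesgue_measure R) `[0, +oo[%classic g2 <=
            sup S * Rintegral (@lebesgue_measure R) `[0, +oo[%classic g1.
  have H := (ae_le_Rintegral _ _ g2 (fun x => sup S * g1 x) mD int2 (intZ _ _ int1)).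
  have H2 : forall x : R, `[0, +oo[%classic x -> 0 <= sup S * g1 x.
    by move=> x _; rewrite mulr_ge0// (le_trans (ltW iS0) iss).
  have H3 := H (fun x _ => g2p x) H2 ae2.
  by move: H3; rewrite (RintegralZl _ mD int1).
have I10 : 0 <= Rintegral (@lebesgue_measure R) `[0, +oo[%classic g1.
  by apply: Rintegral_ge0 => x _; exact: g1p.
have F := final_alg _ _ _ _ _ alpha beta iS0 iss I10 I1le I2le a1.
rewrite /gamma1 /gamma2 /R1 /R2 /renyi_igf.
exact: F.
Qed.
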